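(* Let $k\in\{1,2\}$, $\xi\in\mathbb{C}$, $f:\mathbb{N}\to[0,\infty)$, and $A=\xi(a^\dagger)^k+\xi^*a^k+f(a^\dagger a)$ with domain $\mathcal{D}_0$. Suppose there exists $C>0$ such that $f(n)\le C\beta^{k0}_n$ for all $n\in\mathbb{N}$. Then $A$ is essentially self-adjoint.
   Context: $\mathbb{N}=\{0,1,2,\dots\}$. $\mathcal{H}$ is a separable complex Hilbert space with orthonormal basis $(\phi_n)_{n\in\mathbb{N}}$; $\mathcal{D}_0$ is the set of finite linear combinations of the $\phi_n$. The operators $a,a^\dagger$ have domain $\mathcal{D}_0$ and act by $a\phi_n=\sqrt{n}\,\phi_{n-1}$ ($a\phi_0=0$), $a^\dagger\phi_n=\sqrt{n+1}\,\phi_{n+1}$, extended linearly. $f(a^\dagger a)$ has domain $\mathcal{D}_0$ and $f(a^\dagger a)\phi_n=f(n)\phi_n$. For integers $x\ge1$ and $s\ge0$, $(x,s)=x(x+1)\cdots(x+s-1)$; $\beta^{k0}_n=\sqrt{(n+1,k)}$ (the case $l=0$ of $\beta^{kl}_n=\sqrt{(n-l+1,l)(n-l+1,k)}$). *)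

(* Defs.v *)
From Stdlib Require Import Reals.
From Coquelicot Require Import Coquelicot.
Open Scope R_scope.

(* Concrete model of H: l^2(N) over C, with phi_n the n-th unit sequence.
   Vectors are sequences of coordinates x : nat -> C. *)
Definition vec := nat -> C.

Definition l2 (x : vec) : Prop := ex_series (fun n => (Cmod (x n)) ^ 2).

Definition norm2 (x : vec) : R := Series (fun n => (Cmod (x n)) ^ 2).

Definition vsub (x y : vec) : vec := fun n => Cminus (x n) (y n).

Definition inner (x y : vec) : C :=
  (Series (fun n => Re (Cmult (x n) (Cconj (y n)))),
   Series (fun n => Im (Cmult (x n) (Cconj (y n))))).

(* D_0 : finite linear combinations of the phi_n *)
Definition D0 (x : vec) : Prop := exists N : nat, forall n, (N <= n)%nat -> x n = RtoC 0.

(* a phi_n = sqrt n phi_{n-1}, a^dagger phi_n = sqrt (n+1) phi_{n+1}, in coordinates *)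
Definition ann (x : vec) : vec := fun n => Cmult (RtoC (sqrt (INR (S n)))) (x (S n)).
Definition cre (x : vec) : vec := fun n =>
  match n with
  | O => RtoC 0
  | S m => Cmult (RtoC (sqrt (INR n))) (x m)
  end.

(* f(a^dagger a) phi_n = f(n) phi_n *)
Definition numfun (f : nat -> R) (x : vec) : vec := fun n => Cmult (RtoC (f n)) (x n).

Definition Aop (k : nat) (xi : C) (f : nat -> R) (x : vec) : vec := fun n =>
  Cplus (Cplus (Cmult xi (Nat.iter k cre x n))
               (Cmult (Cconj xi) (Nat.iter k ann x n)))
        (numfun f x n).

(* Operators are represented by their graphs (relations on vectors). *)
Definition graph_rel := vec -> vec -> Prop.

Definition A_graph (k : nat) (xi : C) (f : nat -> R) : graph_rel :=
  fun x y => D0 x /\ forall n, y n = Aop k xi f x n.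

Definition closure_op (T : graph_rel) : graph_rel :=
  fun x y => l2 x /\ l2 y /\
    exists (xs ys : nat -> vec),
      (forall m, T (xs m) (ys m)) /\
      is_lim_seq (fun m => norm2 (vsub (xs m) x)) 0 /\
      is_lim_seq (fun m => norm2 (vsub (ys m) y)) 0.

Definition adjoint_op (T : graph_rel) : graph_rel :=
  fun y z => l2 y /\ l2 z /\ forall x w, T x w -> inner w y = inner x z.

Definition self_adjoint (T : graph_rel) : Prop :=
  forall x y, T x y <-> adjoint_op T x y.

Definition ess_self_adjoint (T : graph_rel) : Prop := self_adjoint (closure_op T).

Fixpoint rising (x s : nat) : nat :=
  match s with
  | O => 1%nat
  | S s' => (rising x s' * (x + s'))%nat
  end.

Definition beta_k0 (k n : nat) : R := sqrt (INR (rising (S n) k)).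

(* Main.v *)
Require Import Defs.
From Stdlib Require Import Reals Lra Lia Psatz FunctionalExtensionality.
From Coquelicot Require Import Coquelicot.
Open Scope R_scope.

Fixpoint rsum (a : nat -> R) (N : nat) : R :=
  match N with O => 0 | S N => rsum a N + a N end.

Lemma rsum_ext a b N : (forall j, (j < N)%nat -> a j = b j) -> rsum a N = rsum b N.
Proof. induction N; simpl; intros H; auto. rewrite IHN, H; auto. Qed.

Lemma rsum_sumf a n : sum_f_R0 a n = rsum a (S n).
Proof. induction n; simpl; [ring|]. simpl in IHn. rewrite IHn. ring. Qed.

Lemma rsum_stable a N M : (forall j, (N <= j)%nat -> a j = 0) -> (N <= M)%nat -> rsum a M = rsum a N.
Proof. intros H HM. induction HM; simpl; auto. rewrite IHHM, H; [ring|lia]. Qed.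

Lemma series_fin a N : (forall j, (N <= j)%nat -> a j = 0) -> is_series a (rsum a N).
Proof.
  intros H. apply is_series_Reals. intros eps Heps. exists N. intros n Hn.
  rewrite rsum_sumf, (rsum_stable a N (S n)); auto. unfold R_dist. rewrite Rminus_diag, Rabs_R0. auto.
Qed.

Lemma Series_fin a N : (forall j, (N <= j)%nat -> a j = 0) -> ex_series a /\ Series a = rsum a N.
Proof. intros H. split. exists (rsum a N). now apply series_fin. apply is_series_unique. now apply series_fin. Qed.

Lemma ex_series_bound (a b : nat -> R) : (forall n, Rabs (a n) <= b n) -> ex_series b -> ex_series a.
Proof. intros H Hb. apply (ex_series_le a b); auto. Qed.

Lemma rsum_lim (a : nat -> R) : ex_series a -> is_lim_seq (rsum a) (Series a).
Proof.
  intros H. apply Series_correct in H. apply is_series_Reals in H.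
  apply is_lim_seq_incr_1. apply is_lim_seq_ext with (sum_f_R0 a).
  intros; apply rsum_sumf. apply is_lim_seq_Reals. exact H.
Qed.

Definition tailseq (a : nat -> R) (M : nat) : nat -> R := fun j => if (M <=? j)%nat then a j else 0.

Lemma tail_eq (a : nat -> R) M : ex_series a -> ex_series (tailseq a M) /\ Series (tailseq a M) = Series a - rsum a M.
Proof.
  intros Ha. set (h := fun j => if (M <=? j)%nat then 0 else a j).
  destruct (Series_fin h M) as [Eh Sh].
  { intros j Hj. unfold h. destruct (Nat.leb_spec M j); lia || auto. }
  assert (Hr : rsum h M = rsum a M).
  { apply rsum_ext. intros j Hj. unfold h. destruct (Nat.leb_spec M j); lia || auto. }
  assert (E : forall j, tailseq a M j = a j - h j).
  { intros j. unfold tailseq, h. destruct (M <=? j)%nat; ring. }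
  split.
  - apply ex_series_ext with (fun j => a j - h j). intros; now rewrite E.
    apply (ex_series_minus a h); auto.
  - rewrite (Series_ext _ (fun j => a j - h j)) by auto. rewrite Series_minus; auto. congruence.
Qed.

Lemma tail_lim (a : nat -> R) : ex_series a -> is_lim_seq (fun M => Series (tailseq a M)) 0.
Proof.
  intros Ha. apply is_lim_seq_ext with (fun M => Series a - rsum a M).
  intros M. symmetry. apply tail_eq; auto.
  replace (Finite 0) with (Finite (Series a - Series a)) by (f_equal; ring).
  apply is_lim_seq_minus'. apply is_lim_seq_const. now apply rsum_lim.
Qed.

Lemma Series_nonneg (a : nat -> R) : (forall n, 0 <= a n) -> ex_series a -> 0 <= Series a.
Proof.
  intros H Ha. destruct (Series_fin (fun _ => 0) 0) as [E0 S0]; auto.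
  simpl in S0. rewrite <- S0. apply Series_le; auto. intros; split; [lra|auto].
Qed.

Definition sqn (c : C) : R := fst c ^ 2 + snd c ^ 2.

Lemma sqn_nonneg c : 0 <= sqn c.
Proof. unfold sqn. nra. Qed.

Lemma Cmod2 c : Cmod c ^ 2 = sqn c.
Proof. unfold Cmod. rewrite pow2_sqrt; auto. apply sqn_nonneg. Qed.

Lemma l2_iff x : l2 x <-> ex_series (fun n => sqn (x n)).
Proof. unfold l2. split; apply ex_series_ext; intros; now rewrite Cmod2. Qed.

Lemma norm2_eq x : norm2 x = Series (fun n => sqn (x n)).
Proof. unfold norm2. apply Series_ext; intros; now rewrite Cmod2. Qed.
Ltac cproj := apply injective_projections; simpl; unfold Re, Im; simpl.

Fixpoint csum (g : nat -> C) (N : nat) : C :=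
  match N with O => RtoC 0 | S N => Cplus (csum g N) (g N) end.

Lemma csum_ext g h N : (forall j, (j < N)%nat -> g j = h j) -> csum g N = csum h N.
Proof. induction N; simpl; intros H; auto. rewrite IHN, H; auto. Qed.

Lemma csum_zero g N : (forall j, (j < N)%nat -> g j = RtoC 0) -> csum g N = RtoC 0.
Proof. induction N; simpl; intros H; auto. rewrite IHN, H; auto. cproj; ring. Qed.

Lemma csum_stable g N M : (forall j, (N <= j)%nat -> g j = RtoC 0) -> (N <= M)%nat -> csum g M = csum g N.
Proof. intros H HM. induction HM; simpl; auto. rewrite IHHM, H; [cproj; ring|lia]. Qed.

Lemma csum_split g k N : csum g (k + N) = Cplus (csum g k) (csum (fun j => g (k + j)%nat) N).
Proof.
  induction N; simpl. rewrite Nat.add_0_r. cproj; ring.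
  rewrite Nat.add_succ_r. simpl. rewrite IHN. cproj; ring.
Qed.

Lemma csum_plus g h N : csum (fun j => Cplus (g j) (h j)) N = Cplus (csum g N) (csum h N).
Proof. induction N; simpl. cproj; ring. rewrite IHN. cproj; ring. Qed.

Lemma fst_csum g N : fst (csum g N) = rsum (fun j => fst (g j)) N.
Proof. induction N; simpl; auto. rewrite IHN; auto. Qed.
Lemma snd_csum g N : snd (csum g N) = rsum (fun j => snd (g j)) N.
Proof. induction N; simpl; auto. rewrite IHN; auto. Qed.

Lemma inner_fin_l u v N : (forall j, (N <= j)%nat -> u j = RtoC 0) ->
  inner u v = csum (fun j => Cmult (u j) (Cconj (v j))) N.
Proof.
  intros H. unfold inner. apply injective_projections; simpl.
  - rewrite fst_csum. apply Series_fin. intros j Hj. rewrite H; auto. unfold Re; simpl; ring.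
  - rewrite snd_csum. apply Series_fin. intros j Hj. rewrite H; auto. unfold Im; simpl; ring.
Qed.

Lemma inner_fin_r u v N : (forall j, (N <= j)%nat -> v j = RtoC 0) ->
  inner u v = csum (fun j => Cmult (u j) (Cconj (v j))) N.
Proof.
  intros H. unfold inner. apply injective_projections; simpl.
  - rewrite fst_csum. apply Series_fin. intros j Hj. rewrite H; auto. unfold Re; simpl; ring.
  - rewrite snd_csum. apply Series_fin. intros j Hj. rewrite H; auto. unfold Im; simpl; ring.
Qed.

Lemma inner_conj u v : inner u v = Cconj (inner v u).
Proof.
  unfold inner, Cconj. simpl. f_equal.
  - apply Series_ext. intros; unfold Re; simpl; ring.
  - rewrite <- Series_opp. apply Series_ext. intros; unfold Im; simpl; ring.
Qed.

Definition Bop (k : nat) (b : nat -> C) (d : nat -> R) (x : vec) : vec := fun n =>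
  Cplus (Cplus (if (k <=? n)%nat then Cmult (Cconj (b (n - k)%nat)) (x (n - k)%nat) else RtoC 0)
               (Cmult (RtoC (d n)) (x n)))
        (Cmult (b n) (x (n + k)%nat)).

Lemma Bop_fin k b d u N : (forall j, (N <= j)%nat -> u j = RtoC 0) ->
  forall j, (N + k <= j)%nat -> Bop k b d u j = RtoC 0.
Proof.
  intros H j Hj. unfold Bop. destruct (Nat.leb_spec k j); [|lia].
  rewrite !H by lia. cproj; ring.
Qed.

Lemma Bop_sym k b d u y N : (forall j, (N <= j)%nat -> u j = RtoC 0) ->
  csum (fun j => Cmult (Bop k b d u j) (Cconj (y j))) (N + k)
  = csum (fun j => Cmult (u j) (Cconj (Bop k b d y j))) N.
Proof.
  intros H.
  set (T1 := fun j => if (k <=? j)%nat then Cmult (Cmult (Cconj (b (j - k)%nat)) (u (j - k)%nat)) (Cconj (y j)) else RtoC 0).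
  set (T2 := fun j => Cmult (Cmult (RtoC (d j)) (u j)) (Cconj (y j))).
  set (T3 := fun j => Cmult (Cmult (b j) (u (j + k)%nat)) (Cconj (y j))).
  set (S1 := fun j => if (k <=? j)%nat then Cmult (u j) (Cmult (b (j - k)%nat) (Cconj (y (j - k)%nat))) else RtoC 0).
  set (S2 := fun j => Cmult (Cmult (u j) (RtoC (d j))) (Cconj (y j))).
  set (S3 := fun j => Cmult (u j) (Cmult (Cconj (b j)) (Cconj (y (j + k)%nat)))).
  rewrite (csum_ext _ (fun j => Cplus (Cplus (T1 j) (T2 j)) (T3 j))).
  2:{ intros j _. unfold Bop, T1, T2, T3. destruct (k <=? j)%nat; cproj; ring. }
  rewrite (csum_ext (fun j => Cmult (u j) _) (fun j => Cplus (Cplus (S1 j) (S2 j)) (S3 j))).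
  2:{ intros j _. unfold Bop, S1, S2, S3. destruct (k <=? j)%nat; cproj; ring. }
  rewrite !csum_plus.
  assert (E1 : csum T1 (N + k) = csum S3 N).
  { rewrite Nat.add_comm, csum_split. rewrite (csum_zero T1).
    2:{ intros j Hj. unfold T1. destruct (Nat.leb_spec k j); [lia|auto]. }
    rewrite (csum_ext _ S3). cproj; ring.
    intros j _. unfold T1, S3. destruct (Nat.leb_spec k (k + j)); [|lia].
    replace (k + j - k)%nat with j by lia. rewrite (Nat.add_comm j k). cproj; ring. }
  assert (E2 : csum T2 (N + k) = csum S2 N).
  { rewrite (csum_stable T2 N). apply csum_ext. intros; unfold T2, S2; cproj; ring.
    intros j Hj; unfold T2; rewrite H by auto; cproj; ring. lia. }
  assert (E3 : csum T3 (N + k) = csum S1 N).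
  { rewrite (csum_stable T3 N).
    2:{ intros j Hj; unfold T3; rewrite H by lia; cproj; ring. } 2: lia.
    rewrite <- (csum_stable S1 N (k + N)).
    2:{ intros j Hj; unfold S1; rewrite H by lia; destruct (k <=? j)%nat; cproj; ring. } 2: lia.
    rewrite csum_split. rewrite (csum_zero S1).
    2:{ intros j Hj. unfold S1. destruct (Nat.leb_spec k j); [lia|auto]. }
    rewrite (csum_ext (fun j => S1 (k + j)%nat) T3). cproj; ring.
    intros j _. unfold T1, S1, T3. destruct (Nat.leb_spec k (k + j)); [|lia].
    replace (k + j - k)%nat with j by lia. rewrite (Nat.add_comm j k). cproj; ring. }
  rewrite E1, E2, E3. cproj; ring.
Qed.

Lemma ex_series_lin (a b : nat -> R) al be : ex_series a -> ex_series b ->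
  ex_series (fun n => al * a n + be * b n).
Proof.
  intros Ha Hb. apply (ex_series_plus (fun n => al * a n) (fun n => be * b n)).
  apply (ex_series_scal_l al a Ha). apply (ex_series_scal_l be b Hb).
Qed.

Lemma Series_lin (a b : nat -> R) al be : ex_series a -> ex_series b ->
  Series (fun n => al * a n + be * b n) = al * Series a + be * Series b.
Proof.
  intros Ha Hb. rewrite Series_plus. rewrite !Series_scal_l. auto.
  apply (ex_series_scal_l al a Ha). apply (ex_series_scal_l be b Hb).
Qed.

Lemma sqn_sub a b : sqn (Cminus a b) <= 2 * sqn a + 2 * sqn b.
Proof. unfold sqn, Cminus, Cplus, Copp; destruct a as [a1 a2], b as [b1 b2]; simpl. pose proof (pow2_ge_0 (a1 + b1)); pose proof (pow2_ge_0 (a2+b2)). simpl in *. lra. Qed.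

Lemma l2_sub x y : l2 x -> l2 y -> l2 (vsub x y).
Proof.
  rewrite !l2_iff. intros Hx Hy. apply ex_series_bound with (fun n => 2 * sqn (x n) + 2 * sqn (y n)).
  intros n. rewrite Rabs_pos_eq by apply sqn_nonneg. apply sqn_sub.
  now apply ex_series_lin.
Qed.

Lemma l2_fin x N : (forall j, (N <= j)%nat -> x j = RtoC 0) -> l2 x.
Proof.
  intros H. apply l2_iff. apply (Series_fin _ N). intros j Hj; rewrite H; auto. unfold sqn; simpl; ring.
Qed.

Lemma D0_l2 x : D0 x -> l2 x.
Proof. intros [N H]. now apply (l2_fin x N). Qed.

Section GLin.
Variable g : C -> R.
Hypothesis g_lin : forall a b c, g (Cmult (Cminus a b) c) = g (Cmult a c) - g (Cmult b c).
Hypothesis g_bound : forall a c s t, 0 < s -> 0 < t -> 4 * s * t = 1 ->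
  Rabs (g (Cmult a (Cconj c))) <= s * sqn a + t * sqn c.

Lemma g_ex u v : l2 u -> l2 v -> ex_series (fun j => g (Cmult (u j) (Cconj (v j)))).
Proof.
  rewrite !l2_iff. intros Hu Hv.
  apply ex_series_bound with (fun n => /2 * sqn (u n) + /2 * sqn (v n)).
  intros n. apply g_bound; lra. now apply ex_series_lin.
Qed.

Lemma g_Series_bound u v s t : l2 u -> l2 v -> 0 < s -> 0 < t -> 4 * s * t = 1 ->
  Rabs (Series (fun j => g (Cmult (u j) (Cconj (v j))))) <= s * norm2 u + t * norm2 v.
Proof.
  intros Hu Hv Hs Ht Hst. pose proof Hu as Hu'; pose proof Hv as Hv'.
  rewrite l2_iff in Hu', Hv'. rewrite !norm2_eq.
  assert (Ea : ex_series (fun j => Rabs (g (Cmult (u j) (Cconj (v j)))))).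
  { apply ex_series_bound with (fun n => s * sqn (u n) + t * sqn (v n)).
    intros n. rewrite Rabs_Rabsolu. apply g_bound; lra. now apply ex_series_lin. }
  eapply Rle_trans. apply Series_Rabs; auto.
  rewrite <- Series_lin by auto. apply Series_le.
  intros n; split. apply Rabs_pos. apply g_bound; lra. now apply ex_series_lin.
Qed.

Lemma g_lim (u : nat -> vec) w v : (forall m, l2 (u m)) -> l2 w -> l2 v ->
  is_lim_seq (fun m => norm2 (vsub (u m) w)) 0 ->
  is_lim_seq (fun m => Series (fun j => g (Cmult (u m j) (Cconj (v j)))))
             (Series (fun j => g (Cmult (w j) (Cconj (v j))))).
Proof.
  intros Hu Hw Hv Hlim.
  apply is_lim_seq_Reals. apply is_lim_seq_Reals in Hlim.
  intros eps Heps.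
  set (B := norm2 v).
  assert (HB : 0 <= B). { unfold B. rewrite norm2_eq. apply Series_nonneg. intros; apply sqn_nonneg. now apply l2_iff. }
  destruct (Hlim (eps * eps / (B + 1))) as [N HN].
  { apply Rdiv_lt_0_compat; nra. }
  exists N. intros m Hm. specialize (HN m Hm). unfold R_dist in *.
  rewrite Rminus_0_r in HN.
  rewrite <- Series_minus by (apply g_ex; auto).
  rewrite (Series_ext _ (fun j => g (Cmult (vsub (u m) w j) (Cconj (v j))))).
  2:{ intros j. unfold vsub. now rewrite g_lin. }
  set (t := eps / (2 * (B + 1))). set (s := (B + 1) / (2 * eps)).
  assert (Ht : 0 < t) by (unfold t; apply Rdiv_lt_0_compat; lra).
  assert (Hs : 0 < s) by (unfold s; apply Rdiv_lt_0_compat; lra).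
  eapply Rle_lt_trans. apply (g_Series_bound _ _ s t); auto. apply l2_sub; auto.
  unfold s, t; field; lra.
  set (D := norm2 (vsub (u m) w)) in *.
  assert (HD0 : 0 <= D). { unfold D. rewrite norm2_eq. apply Series_nonneg. intros; apply sqn_nonneg. apply l2_iff, l2_sub; auto. }
  rewrite Rabs_pos_eq in HN by auto.
  assert (s * D < eps / 2).
  { unfold s. apply Rmult_lt_reg_l with (2 * eps / (B + 1)). apply Rdiv_lt_0_compat; lra.
    replace (2 * eps / (B + 1) * ((B + 1) / (2 * eps) * D)) with D by (field; lra).
    replace (2 * eps / (B + 1) * (eps / 2)) with (eps * eps / (B + 1)) by (field; lra). auto. }
  assert (t * B <= eps / 2).
  { unfold t. apply Rmult_le_reg_l with (2 * (B + 1)). lra.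
    replace (2 * (B + 1) * (eps / (2 * (B + 1)) * B)) with (eps * B) by (field; lra). nra. }
  fold B. lra.
Qed.
End GLin.

Lemma fst_lin a b c : fst (Cmult (Cminus a b) c) = fst (Cmult a c) - fst (Cmult b c).
Proof. destruct a, b, c; simpl; ring. Qed.
Lemma snd_lin a b c : snd (Cmult (Cminus a b) c) = snd (Cmult a c) - snd (Cmult b c).
Proof. destruct a, b, c; simpl; ring. Qed.

Lemma sq_trick s t x y : 0 < s -> 4 * s * t = 1 -> 0 <= s * x ^ 2 + x * y + t * y ^ 2.
Proof.
  intros Hs Hst. assert (0 <= s * (x + 2 * t * y) ^ 2) by (apply Rmult_le_pos; [lra| apply pow2_ge_0]).
  replace (s * x ^ 2 + x * y + t * y ^ 2) with (s * (x + 2 * t * y) ^ 2 + (1 - 4 * s * t) * (x * y + t * y ^ 2)) by ring.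
  rewrite Hst. lra.
Qed.

Lemma fst_bound a c s t : 0 < s -> 0 < t -> 4 * s * t = 1 ->
  Rabs (fst (Cmult a (Cconj c))) <= s * sqn a + t * sqn c.
Proof.
  intros Hs Ht Hst. destruct a as [a1 a2], c as [c1 c2]; unfold sqn; simpl.
  pose proof (sq_trick s t a1 c1 Hs Hst). pose proof (sq_trick s t a2 c2 Hs Hst).
  pose proof (sq_trick s t a1 (-c1) Hs Hst). pose proof (sq_trick s t a2 (-c2) Hs Hst).
  apply Rabs_le. simpl in *. split; nra.
Qed.
Lemma snd_bound a c s t : 0 < s -> 0 < t -> 4 * s * t = 1 ->
  Rabs (snd (Cmult a (Cconj c))) <= s * sqn a + t * sqn c.
Proof.
  intros Hs Ht Hst. destruct a as [a1 a2], c as [c1 c2]; unfold sqn; simpl.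
  pose proof (sq_trick s t a1 c2 Hs Hst). pose proof (sq_trick s t a2 c1 Hs Hst).
  pose proof (sq_trick s t a1 (-c2) Hs Hst). pose proof (sq_trick s t a2 (-c1) Hs Hst).
  apply Rabs_le. simpl in *. split; nra.
Qed.

Lemma inner_lim (u : nat -> vec) w v : (forall m, l2 (u m)) -> l2 w -> l2 v ->
  is_lim_seq (fun m => norm2 (vsub (u m) w)) 0 ->
  is_lim_seq (fun m => fst (inner (u m) v)) (fst (inner w v)) /\
  is_lim_seq (fun m => snd (inner (u m) v)) (snd (inner w v)).
Proof.
  intros. unfold inner; simpl; split.
  - apply (g_lim fst fst_lin fst_bound); auto.
  - apply (g_lim snd snd_lin snd_bound); auto.
Qed.

Lemma lim_uniq (u v : nat -> R) (l1 l2 : R) : is_lim_seq u l1 -> is_lim_seq v l2 -> (forall n, u n = v n) -> l1 = l2.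
Proof.
  intros H1 H2 E. apply is_lim_seq_unique in H1. apply is_lim_seq_unique in H2.
  rewrite (Lim_seq_ext u v E) in H1. rewrite H1 in H2. now injection H2.
Qed.

Lemma csum_last g n : (forall j, (j < n)%nat -> g j = RtoC 0) -> csum g (S n) = g n.
Proof. intros H. simpl. rewrite csum_zero by auto. cproj; ring. Qed.

Definition ev (n : nat) : vec := fun j => if Nat.eqb j n then RtoC 1 else RtoC 0.

Lemma ev_fin n : forall j, (S n <= j)%nat -> ev n j = RtoC 0.
Proof. intros j Hj. unfold ev. destruct (Nat.eqb_spec j n); auto; lia. Qed.

Lemma ev_lt n j : (j < n)%nat -> ev n j = RtoC 0.
Proof. intros Hj. unfold ev. destruct (Nat.eqb_spec j n); auto; lia. Qed.

Lemma ev_n n : ev n n = RtoC 1.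
Proof. unfold ev. now rewrite Nat.eqb_refl. Qed.

Lemma Cconj_inj a b : Cconj a = Cconj b -> a = b.
Proof. intros H. destruct a, b; unfold Cconj in H; simpl in H. injection H; intros. f_equal; lra. Qed.

Section Op.
Variable k : nat.
Variable b : nat -> C.
Variable d : nat -> R.
Variable T : graph_rel.
Hypothesis HT : forall x y, T x y <-> D0 x /\ forall n, y n = Bop k b d x n.

Lemma T_l2 x y : T x y -> l2 x /\ l2 y.
Proof.
  intros H. apply HT in H. destruct H as [[N HN] Hy]. split. now apply (l2_fin x N).
  apply (l2_fin y (N + k)). intros j Hj. rewrite Hy. now apply (Bop_fin k b d x N).
Qed.

Lemma inner_T x y v : T x y -> inner y v = inner x (Bop k b d v).
Proof.
  intros H. apply HT in H. destruct H as [[N HN] Hy].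
  rewrite (inner_fin_l y v (N + k)). rewrite (inner_fin_l x _ N) by auto.
  rewrite <- Bop_sym by auto. apply csum_ext. intros; now rewrite Hy.
  intros j Hj. rewrite Hy. now apply (Bop_fin k b d x N).
Qed.

Lemma norm2_zero x : (forall n, x n = RtoC 0) -> norm2 x = 0.
Proof.
  intros H. rewrite norm2_eq. destruct (Series_fin (fun n => sqn (x n)) 0) as [_ E].
  intros; rewrite H; unfold sqn; simpl; ring. rewrite E. auto.
Qed.

Lemma T_closure x y : T x y -> closure_op T x y.
Proof.
  intros H. destruct (T_l2 x y H) as [Hx Hy]. split; auto. split; auto.
  exists (fun _ => x), (fun _ => y). split; auto.
  split; apply is_lim_seq_ext with (fun _ => 0); try (intros; symmetry; apply norm2_zero; intros; unfold vsub; cproj; ring);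
  apply is_lim_seq_const.
Qed.

Lemma L2 x w y z : closure_op T x w -> l2 y -> l2 z -> (forall n, z n = Bop k b d y n) ->
  inner w y = inner x z.
Proof.
  intros [Hx [Hw [xs [ys [HT' [Hxl Hyl]]]]]] Hy Hz Ez.
  assert (Eq : forall m, inner (ys m) y = inner (xs m) z).
  { intros m. rewrite (inner_T _ _ y (HT' m)). f_equal. apply functional_extensionality. intros; auto. }
  destruct (inner_lim ys w y) as [A1 A2]; auto. intros m; now apply (T_l2 _ _ (HT' m)).
  destruct (inner_lim xs x z) as [B1 B2]; auto. intros m; now apply (T_l2 _ _ (HT' m)).
  apply injective_projections.
  - apply (lim_uniq _ _ _ _ A1 B1). intros; now rewrite Eq.
  - apply (lim_uniq _ _ _ _ A2 B2). intros; now rewrite Eq.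
Qed.

Lemma L1 x w : closure_op T x w -> forall n, w n = Bop k b d x n.
Proof.
  intros H n. pose proof H as [Hx [Hw _]].
  assert (HT1 : T (ev n) (Bop k b d (ev n))). { apply HT. split; auto. exists (S n). apply ev_fin. }
  assert (E := L2 x w (ev n) (Bop k b d (ev n)) H).
  destruct (T_l2 _ _ HT1) as [He HBe].
  specialize (E He HBe (fun _ => eq_refl)).
  rewrite (inner_fin_r w (ev n) (S n)) in E by apply ev_fin.
  rewrite inner_conj in E. rewrite (inner_T _ _ x HT1) in E.
  rewrite (inner_fin_l (ev n) _ (S n)) in E by apply ev_fin.
  rewrite !csum_last in E.
  - rewrite ev_n in E. revert E. destruct (w n) as [w1 w2], (Bop k b d x n) as [p1 p2]. unfold Cconj, Cmult; simpl. intros E. injection E; intros. f_equal; lra.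
  - intros j Hj. rewrite ev_lt; auto. cproj; ring.
  - intros j Hj. rewrite ev_lt; auto. cproj; ring.
Qed.

Lemma L3 y z : adjoint_op (closure_op T) y z -> forall n, z n = Bop k b d y n.
Proof.
  intros [Hy [Hz H]] n.
  assert (HT1 : T (ev n) (Bop k b d (ev n))). { apply HT. split; auto. exists (S n). apply ev_fin. }
  specialize (H _ _ (T_closure _ _ HT1)).
  rewrite (inner_T _ _ y HT1) in H.
  rewrite !(inner_fin_l (ev n) _ (S n)) in H by apply ev_fin.
  rewrite !csum_last in H.
  - rewrite ev_n in H. revert H. destruct (z n) as [w1 w2], (Bop k b d y n) as [p1 p2]. unfold Cconj, Cmult; simpl. intros H. injection H; intros. f_equal; lra.
  - intros j Hj. rewrite ev_lt; auto. cproj; ring.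
  - intros j Hj. rewrite ev_lt; auto. cproj; ring.
Qed.

End Op.

Lemma shift_r (a : nat -> R) k : (forall n, 0 <= a n) -> ex_series a ->
  ex_series (fun j => a (j + k)%nat) /\ Series (fun j => a (j + k)%nat) <= Series a.
Proof.
  revert a; induction k; intros a Hp Ha.
  - split. apply ex_series_ext with a; auto. intros; now rewrite Nat.add_0_r.
    rewrite (Series_ext _ a). lra. intros; now rewrite Nat.add_0_r.
  - destruct (IHk (fun i => a (S i))) as [E HS]; auto. now apply ex_series_incr_1 in Ha.
    split. apply ex_series_ext with (fun j => a (S (j + k))); auto. intros; now rewrite Nat.add_succ_r.
    rewrite (Series_ext _ (fun j => a (S (j + k)))) by (intros; now rewrite Nat.add_succ_r).
    rewrite (Series_incr_1 a Ha). specialize (Hp 0%nat). lra.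
Qed.

Lemma shift_l (a : nat -> R) k : ex_series a ->
  ex_series (fun j => if (k <=? j)%nat then a (j - k)%nat else 0) /\
  Series (fun j => if (k <=? j)%nat then a (j - k)%nat else 0) = Series a.
Proof.
  intros Ha. induction k.
  - split. apply ex_series_ext with a; auto. intros; simpl; now rewrite Nat.sub_0_r.
    apply Series_ext. intros; simpl; now rewrite Nat.sub_0_r.
  - destruct IHk as [E HS].
    assert (E' : ex_series (fun j => if (S k <=? j)%nat then a (j - S k)%nat else 0)).
    { apply ex_series_incr_1. simpl. exact E. }
    split; auto. rewrite Series_incr_1 by auto. simpl. rewrite HS. ring.
Qed.

Definition cf (N j : nat) : R := Rmax 0 (Rmin 1 ((2 * INR N - INR j) / INR N)).

Lemma clamp_lip p q : Rabs (Rmax 0 (Rmin 1 p) - Rmax 0 (Rmin 1 q)) <= Rabs (p - q).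
Proof. unfold Rmax, Rmin. repeat destruct Rle_dec; apply Rabs_le; split_Rabs; lra. Qed.

Lemma cf_range N j : 0 <= cf N j <= 1.
Proof. unfold cf, Rmax, Rmin. repeat destruct Rle_dec; lra. Qed.

Lemma cf_one N j : (0 < N)%nat -> (j <= N)%nat -> cf N j = 1.
Proof.
  intros HN Hj. apply lt_0_INR in HN. apply le_INR in Hj.
  set (q := INR j / INR N). assert (q * INR N = INR j) by (unfold q; field; lra).
  assert (q <= 1) by nra.
  unfold cf. replace ((2 * INR N - INR j) / INR N) with (2 - q) by (unfold q; field; lra).
  unfold Rmax, Rmin. repeat destruct Rle_dec; lra.
Qed.

Lemma cf_zero N j : (0 < N)%nat -> (2 * N <= j)%nat -> cf N j = 0.
Proof.
  intros HN Hj. apply lt_0_INR in HN. apply le_INR in Hj. rewrite mult_INR in Hj. simpl in Hj.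
  set (q := INR j / INR N). assert (q * INR N = INR j) by (unfold q; field; lra).
  assert (2 <= q) by nra.
  unfold cf. replace ((2 * INR N - INR j) / INR N) with (2 - q) by (unfold q; field; lra).
  unfold Rmax, Rmin. repeat destruct Rle_dec; lra.
Qed.

Lemma cf_lip N i k : (0 < N)%nat -> Rabs (cf N i - cf N (i + k)) * INR N <= INR k.
Proof.
  intros HN. apply lt_0_INR in HN. unfold cf.
  eapply Rle_trans. apply Rmult_le_compat_r. lra. apply clamp_lip.
  rewrite plus_INR.
  replace ((2 * INR N - INR i) / INR N - (2 * INR N - (INR i + INR k)) / INR N) with (INR k / INR N) by (field; lra).
  rewrite Rabs_pos_eq. right; field; lra. apply Rdiv_le_0_compat; [apply pos_INR|lra].
Qed.

Lemma sqn_mult a c : sqn (Cmult a c) = sqn a * sqn c.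
Proof. destruct a, c; unfold sqn; simpl; ring. Qed.
Lemma sqn_conj a : sqn (Cconj a) = sqn a.
Proof. destruct a; unfold sqn; simpl; ring. Qed.
Lemma sqn_R r : sqn (RtoC r) = r ^ 2.
Proof. unfold sqn; simpl; ring. Qed.
Lemma sqn3 a c e : sqn (Cplus (Cplus a c) e) <= 3 * sqn a + 3 * sqn c + 3 * sqn e.
Proof.
  destruct a as [a1 a2], c as [c1 c2], e as [e1 e2]; unfold sqn; simpl.
  pose proof (pow2_ge_0 (a1 - c1)); pose proof (pow2_ge_0 (a1 - e1)); pose proof (pow2_ge_0 (c1 - e1)).
  pose proof (pow2_ge_0 (a2 - c2)); pose proof (pow2_ge_0 (a2 - e2)); pose proof (pow2_ge_0 (c2 - e2)).
  simpl in *. lra.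
Qed.

Section Cut.
Variable k : nat.
Variable b : nat -> C.
Variable d : nat -> R.
Variable K : R.
Hypothesis HK : 0 <= K.
Hypothesis Hb : forall i, sqn (b i) <= K * (INR i + 1) ^ 2.

Lemma comm_bound m i : sqn (b i) * (cf (m + k + 1) i - cf (m + k + 1) (i + k)) ^ 2 <= 4 * K * INR k ^ 2.
Proof.
  set (N := (m + k + 1)%nat).
  assert (HN : (0 < N)%nat) by (unfold N; lia).
  destruct (Compare_dec.le_lt_dec (i + k) N) as [H1|H1].
  { rewrite !cf_one by lia. replace (1 - 1) with 0 by ring. pose proof (sqn_nonneg (b i)).
    pose proof (pow2_ge_0 (INR k)). simpl. nra. }
  destruct (Compare_dec.le_lt_dec (2 * N) i) as [H2|H2].
  { rewrite !cf_zero by lia. replace (0 - 0) with 0 by ring. pose proof (pow2_ge_0 (INR k)). simpl.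
    pose proof (sqn_nonneg (b i)). nra. }
  pose proof (cf_lip N i k HN) as HL. set (q := cf N i - cf N (i + k)) in *.
  assert (Hi : INR i + 1 <= 2 * INR N).
  { replace (INR i + 1) with (INR (S i)) by (rewrite S_INR; ring). replace (2 * INR N) with (INR (2 * N)) by (rewrite mult_INR; simpl; ring).
    apply le_INR; lia. }
  assert (Hq : q ^ 2 * INR N ^ 2 <= INR k ^ 2).
  { replace (q ^ 2) with (Rabs q ^ 2) by (unfold Rabs; destruct Rcase_abs; ring).
    rewrite <- Rpow_mult_distr. apply pow_incr. split; auto. apply Rmult_le_pos; [apply Rabs_pos|apply pos_INR]. }
  pose proof (Hb i). pose proof (sqn_nonneg (b i)). pose proof (pos_INR i).
  assert (0 <= q ^ 2) by apply pow2_ge_0.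
  assert (sqn (b i) * q ^ 2 <= K * (INR i + 1) ^ 2 * q ^ 2) by (apply Rmult_le_compat_r; auto).
  assert ((INR i + 1) ^ 2 <= 4 * INR N ^ 2) by (simpl; nra).
  assert (K * (INR i + 1) ^ 2 * q ^ 2 <= K * (4 * INR N ^ 2) * q ^ 2).
  { apply Rmult_le_compat_r; auto. apply Rmult_le_compat_l; auto. }
  assert (K * (4 * INR N ^ 2) * q ^ 2 = 4 * K * (q ^ 2 * INR N ^ 2)) by ring.
  assert (4 * K * (q ^ 2 * INR N ^ 2) <= 4 * K * INR k ^ 2) by (apply Rmult_le_compat_l; lra).
  lra.
Qed.

Lemma comm_small m i : (i <= m)%nat -> cf (m + k + 1) i = cf (m + k + 1) (i + k).
Proof. intros H. rewrite !cf_one by lia. auto. Qed.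

End Cut.

Lemma exR (a b : nat -> R) : ex_series a -> (forall n, a n = b n) -> ex_series b.
Proof. intros H E. exact (ex_series_ext a b E H). Qed.

Section L4.
Variable k : nat.
Variable b : nat -> C.
Variable d : nat -> R.
Variable K : R.
Hypothesis HK : 0 <= K.
Hypothesis Hb : forall i, sqn (b i) <= K * (INR i + 1) ^ 2.
Variable T : graph_rel.
Hypothesis HT : forall x y, T x y <-> D0 x /\ forall n, y n = Bop k b d x n.

Lemma tail_nonneg (a : nat -> R) m j : (forall n, 0 <= a n) -> 0 <= tailseq a m j.
Proof. intros H; unfold tailseq; destruct (m <=? j)%nat; auto; lra. Qed.

Lemma L4 y z : l2 y -> l2 z -> (forall n, z n = Bop k b d y n) -> closure_op T y z.
Proof.
  intros Hy Hz Ez. split; auto. split; auto.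
  set (xs := fun m j => Cmult (RtoC (cf (m + k + 1) j)) (y j)).
  exists xs, (fun m => Bop k b d (xs m)).
  pose proof Hy as Hy'. pose proof Hz as Hz'. rewrite l2_iff in Hy', Hz'.
  set (ay := fun j => sqn (y j)). set (az := fun j => sqn (z j)).
  assert (Hay : forall j, 0 <= ay j) by (intros; apply sqn_nonneg).
  assert (Haz : forall j, 0 <= az j) by (intros; apply sqn_nonneg).
  split; [|split].
  - intros m. apply HT. split; auto. exists (2 * (m + k + 1))%nat. intros j Hj.
    unfold xs. rewrite cf_zero by lia. cproj; ring.
  -
    apply is_lim_seq_le_le with (fun _ => 0) (fun m => Series (tailseq ay m)).
    2: apply is_lim_seq_const. 2: now apply tail_lim.
    intros m. destruct (tail_eq ay m Hy') as [Et _].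
    assert (Hpt : forall j, 0 <= sqn (vsub (xs m) y j) <= tailseq ay m j).
    { intros j. split. apply sqn_nonneg.
      unfold vsub, xs, tailseq, ay.
      replace (sqn (Cminus (Cmult (RtoC (cf (m + k + 1) j)) (y j)) (y j))) with ((1 - cf (m + k + 1) j) ^ 2 * sqn (y j))
        by (destruct (y j); unfold sqn; simpl; ring).
      destruct (Nat.leb_spec m j).
      - pose proof (cf_range (m + k + 1) j). pose proof (sqn_nonneg (y j)).
        assert ((1 - cf (m + k + 1) j) ^ 2 <= 1) by (simpl; nra). nra.
      - rewrite cf_one by lia. simpl; lra. }
    rewrite norm2_eq. split.
    + apply Series_nonneg. intros; apply sqn_nonneg.
      apply ex_series_bound with (tailseq ay m); auto. intros j. rewrite Rabs_pos_eq; apply Hpt.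
    + apply Series_le; auto.
  -
    set (M := 4 * K * INR k ^ 2).
    assert (HM : 0 <= M) by (unfold M; pose proof (pow2_ge_0 (INR k)); nra).
    set (Ty := fun m => Series (tailseq ay m)). set (Tz := fun m => Series (tailseq az m)).
    apply is_lim_seq_le_le with (fun _ => 0) (fun m => (3 * M + 3 * M) * Ty m + 3 * Tz m).
    2: apply is_lim_seq_const.
    2:{ replace (Finite 0) with (Finite ((3 * M + 3 * M) * 0 + 3 * 0)) by (f_equal; ring).
        apply is_lim_seq_plus'; apply (is_lim_seq_scal_l _ _ (Finite 0)); now apply tail_lim. }
    intros m. set (N := (m + k + 1)%nat).
    set (L := fun j => if (k <=? j)%nat then tailseq ay m (j - k)%nat else 0).
    set (Rr := fun j => tailseq ay m (j + k)%nat).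
    destruct (tail_eq ay m Hy') as [Ety _]. destruct (tail_eq az m Hz') as [Etz _].
    destruct (shift_l (tailseq ay m) k Ety) as [EL SL].
    destruct (shift_r (tailseq ay m) k) as [ER SR]; auto. intros; apply tail_nonneg; auto.
    set (U := fun j => (3 * M) * L j + ((3 * M) * Rr j + 3 * tailseq az m j)).
    assert (EU : ex_series U).
    { assert (E1 : ex_series (fun j => 3 * M * Rr j + 3 * tailseq az m j)) by (apply ex_series_lin; auto).
      assert (E2 := ex_series_lin L _ (3 * M) 1 EL E1).
      apply (exR _ _ E2). intros; unfold U; ring. }
    assert (SU : Series U <= (3 * M + 3 * M) * Ty m + 3 * Tz m).
    { unfold U. rewrite (Series_ext _ (fun j => (3 * M) * L j + 1 * ((3 * M) * Rr j + 3 * tailseq az m j))) by (intros; ring).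
      rewrite Series_lin; auto. 2: apply (ex_series_lin Rr _ (3 * M) 3); auto.
      rewrite Series_lin; auto. fold L in SL. fold Rr in SR. unfold Ty, Tz. rewrite SL.
      assert (3 * M * Series Rr <= 3 * M * Series (tailseq ay m)) by (apply Rmult_le_compat_l; lra). lra. }
    assert (Hpt : forall j, 0 <= sqn (vsub (Bop k b d (xs m)) z j) <= U j).
    { intros j. split. apply sqn_nonneg.
      set (c := cf N).
      assert (Ej : vsub (Bop k b d (xs m)) z j =
        Cplus (Cplus (if (k <=? j)%nat then Cmult (Cconj (b (j - k)%nat)) (Cmult (RtoC (c (j - k)%nat - c j)) (y (j - k)%nat)) else RtoC 0)
                     (Cmult (b j) (Cmult (RtoC (c (j + k)%nat - c j)) (y (j + k)%nat))))
              (Cmult (RtoC (c j - 1)) (z j))).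
      { unfold vsub. rewrite Ez. unfold Bop, xs. fold N. fold c. destruct (k <=? j)%nat; cproj; ring. }
      rewrite Ej. eapply Rle_trans. apply sqn3. unfold U.
      match goal with |- 3 * sqn ?a + 3 * sqn ?b + 3 * sqn ?e <= _ =>
        enough (sqn a <= M * L j /\ sqn b <= M * Rr j /\ sqn e <= tailseq az m j) by lra end.
      split; [|split].
      - unfold L. destruct (Nat.leb_spec k j).
        + rewrite !sqn_mult, sqn_conj, sqn_R. set (i := (j - k)%nat).
          replace j with (i + k)%nat by (unfold i; lia).
          unfold tailseq. destruct (Nat.leb_spec m i).
          * pose proof (comm_bound k b K HK Hb m i). fold N in H1. fold c in H1. fold M in H1.
            fold (ay i). rewrite <- Rmult_assoc. apply Rmult_le_compat_r; auto.
          * assert (Hci : c i = c (i + k)%nat) by (unfold c, N; apply comm_small; lia). rewrite Hci. replace (c (i + k)%nat - c (i + k)%nat) with 0 by ring. simpl; lra.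
        + rewrite sqn_R. simpl; lra.
      - rewrite !sqn_mult, sqn_R. unfold Rr, tailseq. destruct (Nat.leb_spec m j).
        + destruct (Nat.leb_spec m (j + k)); [|lia].
          pose proof (comm_bound k b K HK Hb m j). fold N in H1. fold c in H1. fold M in H1.
          fold (ay (j + k)%nat). rewrite <- Rmult_assoc. apply Rmult_le_compat_r; auto.
          replace ((c (j + k)%nat - c j) ^ 2) with ((c j - c (j + k)%nat) ^ 2) by ring. auto.
        + assert (Hci : c j = c (j + k)%nat) by (unfold c, N; apply comm_small; lia). rewrite <- Hci. replace (c j - c j) with 0 by ring.
          pose proof (tail_nonneg ay m (j + k) Hay). unfold tailseq in H0. simpl. nra.
      - rewrite sqn_mult, sqn_R. unfold tailseq. destruct (Nat.leb_spec m j).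
        + destruct (cf_range N j) as [Hc1 Hc2]. change (cf N j) with (c j) in Hc1, Hc2.
          assert (Hz0 : 0 <= az j) by apply Haz. fold (az j).
          assert (Hq : (c j - 1) ^ 2 <= 1) by (simpl; nra).
          assert (Hq0 : 0 <= (c j - 1) ^ 2) by apply pow2_ge_0.
          pose proof (Rmult_le_compat_r (az j) _ _ Hz0 Hq). lra.
        + unfold c. rewrite cf_one by lia. simpl; lra. }
    rewrite norm2_eq. split.
    + apply Series_nonneg. intros; apply sqn_nonneg.
      apply ex_series_bound with U; auto. intros j. rewrite Rabs_pos_eq; apply Hpt.
    + eapply Rle_trans; [|exact SU]. apply Series_le; auto.
Qed.

End L4.

Lemma ess_gen k b d K T : 0 <= K -> (forall i, sqn (b i) <= K * (INR i + 1) ^ 2) ->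
  (forall x y, T x y <-> D0 x /\ forall n, y n = Bop k b d x n) -> ess_self_adjoint T.
Proof.
  intros HK Hb HT. unfold ess_self_adjoint, self_adjoint. intros x y; split.
  - intros H. pose proof H as [Hx [Hy _]]. split; auto; split; auto. intros x' w' H'.
    apply (L2 k b d T HT x' w' x y H' Hx Hy). apply (L1 k b d T HT x y H).
  - intros H. pose proof H as [Hx [Hy _]]. apply (L4 k b d K HK Hb T HT); auto.
    apply (L3 k b d T HT x y H).
Qed.

Definition b1 (xi : C) (n : nat) : C := Cmult (Cconj xi) (RtoC (sqrt (INR (S n)))).
Definition b2 (xi : C) (n : nat) : C := Cmult (Cconj xi) (RtoC (sqrt (INR (S n)) * sqrt (INR (S (S n))))).

Lemma A1 xi f x n : Aop 1 xi f x n = Bop 1 (b1 xi) f x n.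
Proof.
  unfold Aop, Bop, b1, numfun. destruct n as [|m]; cbn -[INR sqrt].
  - cproj; ring.
  - rewrite Nat.sub_0_r, Nat.add_1_r. cproj; ring.
Qed.

Lemma A2 xi f x n : Aop 2 xi f x n = Bop 2 (b2 xi) f x n.
Proof.
  unfold Aop, Bop, b2, numfun. destruct n as [|[|p]]; cbn -[INR sqrt].
  - cproj; ring.
  - cproj; ring.
  - rewrite Nat.sub_0_r. replace (p + 2)%nat with (S (S p)) by lia. cproj; ring.
Qed.

Lemma sqrt_sq_INR n : sqrt (INR n) ^ 2 = INR n.
Proof. rewrite pow2_sqrt; auto. apply pos_INR. Qed.

Theorem proposition3p1 (k : nat) (xi : C) (f : nat -> R)
  (hk : k = 1%nat \/ k = 2%nat)
  (hf : forall n, (0 <= f n)%R)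
  (hC : exists Cc : R, (0 < Cc)%R /\ forall n : nat, (f n <= Cc * beta_k0 k n)%R) :
  ess_self_adjoint (A_graph k xi f).
Proof.
  destruct hk as [-> | ->].
  - apply (ess_gen 1 (b1 xi) f (sqn xi)). apply sqn_nonneg.
    + intros i. unfold b1. rewrite sqn_mult, sqn_conj, sqn_R, sqrt_sq_INR, S_INR.
      pose proof (sqn_nonneg xi). pose proof (pos_INR i). simpl. nra.
    + intros x y. unfold A_graph. split; intros [H1 H2]; split; auto; intros n; rewrite H2; now rewrite A1.
  - apply (ess_gen 2 (b2 xi) f (2 * sqn xi)). pose proof (sqn_nonneg xi); lra.
    + intros i. unfold b2. rewrite sqn_mult, sqn_conj, sqn_R, Rpow_mult_distr, !sqrt_sq_INR, !S_INR.
      pose proof (sqn_nonneg xi). pose proof (pos_INR i). simpl. nra.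
    + intros x y. unfold A_graph. split; intros [H1 H2]; split; auto; intros n; rewrite H2; now rewrite A2.
Qed.
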